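(* Let $A$ be an approximately unital Banach algebra such that ${\mathfrak r}_A$ is weak* dense in ${\mathfrak r}_{A^{**}}$. Then $\{x\in{\mathfrak r}_A:\|x\|\le1\}$ is weak* dense in $\{\eta\in{\mathfrak r}_{A^{**}}:\|\eta\|\le1\}$. If in addition there exists a mixed identity of norm $1$ for $A^{**}$ lying in ${\mathfrak r}_{A^{**}}$, then $A$ has a contractive approximate identity in ${\mathfrak r}_A$.
   Context: Banach algebras are complex with submultiplicative norm; ''unital'' means identity of norm 1; approximately unital means having a contractive approximate identity. Multiplier unitization $A^1$: $A$ if unital, otherwise $A+\mathbb{C}1$ with $\|a+\lambda1\|=\sup\{\|ac+\lambda c\|:c\in A,\|c\|\le1\}$. ${\mathfrak r}_A=\{a:\mathrm{Re}\,\varphi(a)\ge0$ for all $\varphi\in(A^1)^*$ with $\|\varphi\|=\varphi(1)=1\}$. Biduals carry the second Arens product; $A^{**}\cong A^{\perp\perp}\subset(A^1)^{**}$; ${\mathfrak r}_{A^{**}}=A^{**}\cap{\mathfrak r}_{(A^1)^{**}}$, where ${\mathfrak r}_{(A^1)^{**}}$ is the set of elements of the unital algebra $(A^1)^{**}$ at which every state has nonnegative real part. A mixed identity for $A^{**}$ is an element that is a right identity for the first Arens product and a left identity for the second Arens product. *)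

(* Defs.v *)
From HB Require Import structures.
From mathcomp Require Import all_boot all_order all_algebra.
From mathcomp Require Import boolp classical_sets reals.
From mathcomp.real_closed Require Import complex.

Set Implicit Arguments.
Unset Strict Implicit.
Unset Printing Implicit Defensive.

Import Order.TTheory GRing.Theory Num.Theory.
Local Open Scope ring_scope.
Local Open Scope classical_set_scope.

Section BanachDefs.
Variable R : realType.
Local Notation C := (R[i]).

Definition cabs (z : C) : R := Num.sqrt (complex.Re z ^+ 2 + complex.Im z ^+ 2).
Definition cre (z : C) : R := complex.Re z.

(* A (possibly non-complete) normed complex space, presented concretely:
   a carrier type, a membership predicate (elements of the space are the
   members of the carrier), vector operations and a norm.  Elements of dual
   spaces are represented by functions on the carrier; two such functions
   represent the same functional iff they agree on members. *)
Record nspace := NSpace {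
  ns_car : Type;
  ns_in : ns_car -> Prop;
  ns_add : ns_car -> ns_car -> ns_car;
  ns_scale : C -> ns_car -> ns_car;
  ns_norm : ns_car -> R }.
Arguments ns_in : clear implicits.
Arguments ns_add : clear implicits.
Arguments ns_scale : clear implicits.
Arguments ns_norm : clear implicits.

Definition is_blf (X : nspace) (f : ns_car X -> C) : Prop :=
  (forall (a : C) x y, ns_in X x -> ns_in X y ->
      f (ns_add X (ns_scale X a x) y) = a * f x + f y) /\
  (exists M : R, forall x, ns_in X x -> cabs (f x) <= M * ns_norm X x).

Definition dual_norm (X : nspace) (f : ns_car X -> C) : R :=
  sup [set r | exists x, [/\ ns_in X x, ns_norm X x <= 1 & r = cabs (f x)]].

Definition dual (X : nspace) : nspace :=
  @NSpace (ns_car X -> C) (@is_blf X)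
    (fun f g x => f x + g x) (fun a f x => a * f x) (@dual_norm X).

Definition canon (X : nspace) (x : ns_car X) : ns_car (dual (dual X)) :=
  fun f => f x.

Definition is_state (X : nspace) (one : ns_car X) (f : ns_car X -> C) : Prop :=
  [/\ is_blf f, dual_norm f = 1 & f one = 1].

Definition rset (X : nspace) (one : ns_car X) (x : ns_car X) : Prop :=
  ns_in X x /\ forall f, is_state one f -> 0 <= cre (f x).

Variables (V : lmodType C) (mul : V -> V -> V) (nrm : V -> R).

Definition is_banach_algebra : Prop :=
  (forall x y z, mul x (mul y z) = mul (mul x y) z) /\
  (forall (a : C) x y z, mul (a *: x + y) z = a *: mul x z + mul y z) /\
  (forall (a : C) x y z, mul z (a *: x + y) = a *: mul z x + mul z y) /\
  (forall x, 0 <= nrm x) /\ (forall x, nrm x = 0 -> x = 0) /\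
  (forall x y, nrm (x + y) <= nrm x + nrm y) /\
  (forall (a : C) x, nrm (a *: x) = cabs a * nrm x) /\
  (forall x y, nrm (mul x y) <= nrm x * nrm y) /\
  (forall u : nat -> V,
    (forall eps : R, 0 < eps -> exists N : nat, forall m n : nat,
        (N <= m)%N -> (N <= n)%N -> nrm (u m - u n) < eps) ->
    exists l : V, forall eps : R, 0 < eps -> exists N : nat,
        forall n : nat, (N <= n)%N -> nrm (u n - l) < eps).

Definition is_identity (u : V) : Prop :=
  (forall a, mul u a = a /\ mul a u = a) /\ nrm u = 1.

Definition unital : Prop := exists u, is_identity u.

Definition directed (I : Type) (le : I -> I -> Prop) : Prop :=
  [/\ inhabited I, (forall i, le i i),
      (forall i j k, le i j -> le j k -> le i k) &
      forall i j, exists k, le i k /\ le j k].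

Definition net_cvg (I : Type) (le : I -> I -> Prop) (x : I -> V) (l : V) :=
  forall eps : R, 0 < eps -> exists i0, forall i, le i0 i -> nrm (x i - l) < eps.

Definition has_cai_in (S : V -> Prop) : Prop :=
  exists (I : Type) (le : I -> I -> Prop) (e : I -> V),
    [/\ directed le,
        (forall i, S (e i) /\ nrm (e i) <= 1) &
        forall a, net_cvg le (fun i => mul (e i) a) a /\
                  net_cvg le (fun i => mul a (e i)) a].

Definition approx_unital : Prop := has_cai_in (fun _ => True).

Definition spaceA : nspace :=
  @NSpace V (fun _ => True) (fun x y => x + y) (fun a x => a *: x) nrm.

(* A + C1 with the multiplier norm (the unitization when A is nonunital) *)
Definition mult_norm (p : V * C) : R :=
  sup [set r | exists c, nrm c <= 1 /\ r = nrm (mul p.1 c + p.2 *: c)].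

Definition spaceA1 : nspace :=
  @NSpace (V * C)%type (fun _ => True)
    (fun p q => (p.1 + q.1, p.2 + q.2)) (fun a p => (a *: p.1, a * p.2))
    mult_norm.

Definition A1_one : V * C := (0, 1).
Definition A1_incl (a : V) : V * C := (a, 0).

(* r_A : computed in the multiplier unitization A^1 (= A if A unital) *)
Definition rA (a : V) : Prop :=
  (forall u, is_identity u -> rset (X := spaceA) u a) /\
  (~ unital -> rset (X := spaceA1) A1_one (A1_incl a)).

Definition Adual := dual spaceA.
Definition Abidual := dual Adual.
Definition in_bidual (eta : ns_car Abidual) : Prop := ns_in Abidual eta.
Definition bidual_norm (eta : ns_car Abidual) : R := ns_norm Abidual eta.

(* embedding A^** = A^{perp perp} into (A^1)^** *)
Definition bidual_to_A1 (eta : ns_car Abidual) : ns_car (dual (dual spaceA1)) :=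
  fun psi => eta (fun a => psi (A1_incl a)).

(* r_{A^**} = A^** \cap r_{(A^1)^**} *)
Definition rA2 (eta : ns_car Abidual) : Prop :=
  in_bidual eta /\
  (forall u, is_identity u -> rset (X := Abidual) (canon (X := spaceA) u) eta) /\
  (~ unital ->
     rset (X := dual (dual spaceA1)) (canon (X := spaceA1) A1_one)
          (bidual_to_A1 eta)).

Definition fa (f : V -> C) (a : V) : V -> C := fun b => f (mul a b).
Definition af (a : V) (f : V -> C) : V -> C := fun b => f (mul b a).
Definition Phif (Phi : ns_car Abidual) (f : V -> C) : V -> C :=
  fun a => Phi (fa f a).
Definition fPhi (f : V -> C) (Phi : ns_car Abidual) : V -> C :=
  fun a => Phi (af a f).
Definition arens1 (Phi Psi : ns_car Abidual) : ns_car Abidual :=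
  fun f => Phi (Phif Psi f).
Definition arens2 (Phi Psi : ns_car Abidual) : ns_car Abidual :=
  fun f => Psi (fPhi f Phi).

(* mixed identity: right identity for the first Arens product and left
   identity for the second (equalities in A^** = agreement on A^* ) *)
Definition mixed_identity (E : ns_car Abidual) : Prop :=
  in_bidual E /\
  forall Phi, in_bidual Phi -> forall f, is_blf (X := spaceA) f ->
    arens1 Phi E f = Phi f /\ arens2 E Phi f = Phi f.

(* weak* density: every element of T lies in the sigma(A^**, A^* )-closure of
   the canonical image of S (basic weak* neighbourhoods). *)
Definition wstar_dense_in (S : V -> Prop) (T : ns_car Abidual -> Prop) : Prop :=
  forall eta, T eta ->
  forall (n : nat) (fs : 'I_n -> (V -> C)) (eps : R),
    (forall i, is_blf (X := spaceA) (fs i)) -> 0 < eps ->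
    exists x, S x /\ forall i, cabs (eta (fs i) - fs i x) < eps.

End BanachDefs.

Arguments in_bidual {R V} nrm eta.
Arguments bidual_norm {R V} nrm eta.
Arguments bidual_to_A1 {R V} mul nrm eta psi.
Arguments rA2 {R V} mul nrm eta.
Arguments mixed_identity {R V} mul nrm E.
Arguments wstar_dense_in {R V} nrm S T.

(* Main.v *)
Require Import Defs.
From HB Require Import structures.
From mathcomp Require Import all_boot all_order all_algebra.
From mathcomp Require Import boolp classical_sets reals.
From mathcomp.real_closed Require Import complex.
From mathcomp Require Import ring lra.
Import Order.TTheory GRing.Theory Num.Theory.
Local Open Scope ring_scope.
Local Open Scope complex_scope.
Local Open Scope classical_set_scope.

Section HB.
Context {R : realType}.

Lemma infS_le (S : set R) c a : (forall y, S y -> c <= y) -> S a -> inf S <= a.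
Proof. by move=> hc Sa; apply: ge_inf => //; exists c. Qed.

Lemma le_infS (S : set R) c a : S a -> (forall y, S y -> c <= y) -> c <= inf S.
Proof. by move=> Sa hc; apply: lb_le_inf => //; exists a. Qed.

Definition sublin {X : lmodType R[i]} (p : X -> R) :=
  (forall x y, p (x + y) <= p x + p y) /\
  (forall (t : R) x, 0 <= t -> p (t%:C *: x) = t * p x).

Lemma sublin0 {X : lmodType R[i]} {p : X -> R} : sublin p -> p 0 = 0.
Proof.
case=> _ h; have := h 0 0 (lexx _); by rewrite scaler0 mul0r.
Qed.

Lemma sublin_lb {X : lmodType R[i]} {p : X -> R} x : sublin p -> - p (- x) <= p x.
Proof.
move=> sp; have := (sp.1 x (- x)); rewrite subrr sublin0 //.
by rewrite -lerBlDr sub0r.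
Qed.


Lemma HB (X : lmodType R[i]) (P : X -> R) : sublin P ->
  exists psi : X -> R, [/\ (forall x y, psi (x + y) = psi x + psi y),
     (forall t x, psi (t%:C *: x) = t * psi x) & (forall x, psi x <= P x)].
Proof.
move=> sP.
pose T := {q : X -> R | sublin q /\ forall x, q x <= P x}.
pose Rl := fun s t : T => `[< forall x, sval t x <= sval s x >].
pose tP : T := exist _ P (conj sP (fun x => lexx _)).
have [[q [sq qP]] qmax] : exists q : T, premaximal Rl q.
  apply: (ZL_preorder tP).
  - by move=> t; apply/asboolP.
  - move=> r s t /asboolP h1 /asboolP h2; apply/asboolP => x.
    exact: le_trans (h2 x) (h1 x).
  move=> A totA.
  case: (pselect (A !=set0)) => [[q0 Aq0]|A0]; last first.
    by exists tP => s As; exfalso; apply: A0; exists s.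
  pose m x := inf [set sval q x | q in A].
  have lbq : forall x (q : T), - P (- x) <= sval q x.
    move=> x [q [sq qP]] /=; have := sublin_lb x sq; apply: le_trans.
    by rewrite lerN2.
  have mlb : forall x q, A q -> m x <= sval q x.
    move=> x q Aq; apply: (@infS_le _ (- P (- x))).
      by move=> y [q' _ <-]; apply: lbq.
    by exists q.
  have mge : forall x c, (forall q, A q -> c <= sval q x) -> c <= m x.
    move=> x c hc; apply: (@le_infS _ _ (sval q0 x)); first by exists q0.
    by move=> y [q' Aq' <-]; apply: (hc).
  have sm : sublin m.
    split.
    + move=> x y.
      have key : forall q1 q2, A q1 -> A q2 -> m (x + y) <= sval q1 x + sval q2 y.
        move=> q1 q2 A1 A2; case: (totA _ _ A1 A2) => /asboolP h.
        * apply: le_trans (mlb _ _ A2) _.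
          apply: le_trans ((proj1 (proj1 (svalP q2))) x y) _.
          by rewrite lerD2r.
        * apply: le_trans (mlb _ _ A1) _.
          apply: le_trans ((proj1 (proj1 (svalP q1))) x y) _.
          by rewrite lerD2l.
      rewrite -lerBlDr; apply: (mge) => q1 A1; rewrite lerBlDr [_ + m y]addrC -lerBlDr.
      by apply: (mge) => q2 A2; rewrite lerBlDr [sval q2 y + _]addrC; apply: (key).
    + move=> t x t0.
      case: (eqVneq t 0) => [->|tn0].
        rewrite rmorph0 scale0r mul0r; apply/le_anti/andP; split.
          by apply: le_trans (mlb _ _ Aq0) _; rewrite sublin0 //; case: (svalP q0).
        by apply: (mge) => q Aq; rewrite sublin0 //; case: (svalP q).
      have tp : 0 < t by rewrite lt_def tn0 t0.
      apply/le_anti/andP; split.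
        have -> : m (t%:C *: x) = t * (t^-1 * m (t%:C *: x)).
          by rewrite mulrA mulfV // mul1r.
        rewrite ler_pM2l //; apply: (mge) => q Aq.
        rewrite -(ler_pM2l tp) mulrA mulfV // mul1r.
        rewrite -(proj2 (proj1 (svalP q))) //; exact: mlb.
      apply: (mge) => q Aq; rewrite (proj2 (proj1 (svalP q))) // ler_pM2l //.
      exact: mlb.
  have mP : forall x, m x <= P x.
    move=> x; apply: le_trans (mlb _ _ Aq0) _; by case: (svalP q0).
  exists (exist _ m (conj sm mP)) => s As; apply/asboolP => x /=; exact: mlb.
(* minimal q is linear *)
have anti : forall y, q (- y) <= - q y.
  move=> y.
  pose qy x := inf [set q (x + t%:C *: y) - t * q y | t in [set t | 0 <= t]].
  have qlb : forall x t, 0 <= t -> - q (- x) <= q (x + t%:C *: y) - t * q y.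
    move=> x t t0; rewrite -(proj2 sq) //.
    have := proj1 sq (x + t%:C *: y) (- x).
    rewrite [x + _]addrC addrK => h; lra.
  have qyle : forall x t, 0 <= t -> qy x <= q (x + t%:C *: y) - t * q y.
    move=> x t t0; apply: (@infS_le _ (- q (- x))).
      by move=> z [s s0 <-]; apply: (qlb).
    by exists t.
  have qyge : forall x c, (forall t, 0 <= t -> c <= q (x + t%:C *: y) - t * q y) ->
      c <= qy x.
    move=> x c hc; apply: (@le_infS _ _ (q (x + 0%:C *: y) - 0 * q y)).
      by exists 0 => //=.
    by move=> z [s s0 <-]; apply: (hc).
  have sqy : sublin qy.
    split.
    + move=> x1 x2.
      have key : forall t1 t2, 0 <= t1 -> 0 <= t2 ->
          qy (x1 + x2) <= (q (x1 + t1%:C *: y) - t1 * q y) + (q (x2 + t2%:C *: y) - t2 * q y).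
        move=> t1 t2 t1p t2p.
        apply: le_trans (qyle _ (t1 + t2) (addr_ge0 t1p t2p)) _.
        rewrite rmorphD scalerDl addrACA.
        have := proj1 sq (x1 + t1%:C *: y) (x2 + t2%:C *: y); lra.
      rewrite -lerBlDr; apply: (qyge) => t1 t1p; rewrite lerBlDr [_ + qy x2]addrC -lerBlDr.
      apply: (qyge) => t2 t2p; rewrite lerBlDr; have := key t1 t2 t1p t2p; lra.
    + move=> t x t0.
      case: (eqVneq t 0) => [->|tn0].
        rewrite rmorph0 scale0r mul0r; apply/le_anti/andP; split.
          apply: le_trans (qyle 0 0 (lexx _)) _.
          by rewrite rmorph0 scale0r addr0 sublin0 // mul0r subr0.
        by apply: (qyge) => s s0; rewrite add0r (proj2 sq) // subrr.
      have tp : 0 < t by rewrite lt_def tn0 t0.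
      apply/le_anti/andP; split.
        have -> : qy (t%:C *: x) = t * (t^-1 * qy (t%:C *: x)).
          by rewrite mulrA mulfV // mul1r.
        rewrite ler_pM2l //; apply: (qyge) => s s0.
        rewrite -(ler_pM2l tp) mulrA mulfV // mul1r.
        apply: le_trans (qyle _ (t * s) (mulr_ge0 t0 s0)) _.
        rewrite rmorphM -scalerA -scalerDr (proj2 sq) // mulrBr mulrA.
        by [].
      apply: (qyge) => s s0.
      have -> : t%:C *: x + s%:C *: y = t%:C *: (x + (t^-1 * s)%:C *: y).
        by rewrite scalerDr scalerA -rmorphM mulrA mulfV // mul1r.
      rewrite (proj2 sq) //.
      have -> : s * q y = t * ((t^-1 * s) * q y).
        by rewrite !mulrA mulfV // mul1r.
      rewrite -mulrBr ler_pM2l //; apply: (qyle).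
      by rewrite mulr_ge0 // invr_ge0.
  have qyq : forall x, qy x <= q x.
    move=> x; apply: le_trans (qyle x 0 (lexx _)) _.
    by rewrite rmorph0 scale0r addr0 mul0r subr0.
  have qyP : forall x, qy x <= P x.
    by move=> x; apply: le_trans (qyq x) (qP x).
  have := qmax (exist _ qy (conj sqy qyP)).
  have h1 : Rl (exist _ q (conj sq qP)) (exist _ qy (conj sqy qyP)).
    by apply/asboolP => x /=; apply: qyq.
  move=> /(_ h1) /asboolP /= h2.
  apply: le_trans (h2 _) _; apply: le_trans (qyle _ 1 ler01) _.
  by rewrite rmorph1 scale1r addNr sublin0 // mul1r sub0r.
have qN : forall y, q (- y) = - q y.
  move=> y; apply/le_anti/andP; split; first exact: anti.
  by rewrite -lerN2 opprK; apply: sublin_lb.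
exists q; split => //.
- move=> x y; apply/le_anti/andP; split; first exact: (proj1 sq).
  have := proj1 sq (- x) (- y); rewrite -opprD !qN; lra.
- move=> t x; case: (leP 0 t) => t0; first exact: (proj2 sq).
  have -> : t%:C *: x = - ((- t)%:C *: x) by rewrite rmorphN scaleNr opprK.
  by rewrite qN (proj2 sq) ?oppr_ge0 ?ltW // mulNr opprK.
Qed.


Lemma HBcone (X : lmodType R[i]) (N : X -> R) (Q : X -> R -> Prop) :
  sublin N -> Q 0 0 ->
  (forall c1 r1 c2 r2, Q c1 r1 -> Q c2 r2 -> Q (c1 + c2) (r1 + r2)) ->
  (forall t c r, 0 <= t -> Q c r -> Q (t%:C *: c) (t * r)) ->
  (forall c r, Q c r -> r <= N c) ->
  exists psi : X -> R, [/\ (forall x y, psi (x + y) = psi x + psi y),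
     (forall t x, psi (t%:C *: x) = t * psi x), (forall x, psi x <= N x) &
     (forall c r, Q c r -> r <= psi c)].
Proof.
move=> sN Q00 QD QZ QN.
pose P w := inf [set N (w + cr.1) - cr.2 | cr in [set cr : X * R | Q cr.1 cr.2]].
have lb : forall w c r, Q c r -> - N (- w) <= N (w + c) - r.
  move=> w c r Qcr; have := QN _ _ Qcr; have := proj1 sN (w + c) (- w).
  rewrite [w + c]addrC addrK; lra.
have Ple : forall w c r, Q c r -> P w <= N (w + c) - r.
  move=> w c r Qcr; apply: (@infS_le _ (- N (- w))).
    by move=> z [[c' r'] /= Q' <-]; apply: (lb).
  by exists (c, r).
have Pge : forall w z, (forall c r, Q c r -> z <= N (w + c) - r) -> z <= P w.
  move=> w z hz; apply: (@le_infS _ _ (N (w + 0) - 0)).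
    by exists (0, 0).
  by move=> y [[c' r'] /= Q' <-]; apply: (hz).
have sP : sublin P.
  split.
  + move=> w1 w2.
    have key : forall c1 r1 c2 r2, Q c1 r1 -> Q c2 r2 ->
        P (w1 + w2) <= (N (w1 + c1) - r1) + (N (w2 + c2) - r2).
      move=> c1 r1 c2 r2 Q1 Q2.
      apply: le_trans (Ple _ _ _ (QD _ _ _ _ Q1 Q2)) _.
      rewrite addrACA; have := proj1 sN (w1 + c1) (w2 + c2); lra.
    rewrite -lerBlDr; apply: (Pge) => c1 r1 Q1; rewrite lerBlDr [_ + P w2]addrC -lerBlDr.
    apply: (Pge) => c2 r2 Q2; rewrite lerBlDr; have := key _ _ _ _ Q1 Q2; lra.
  + move=> t w t0.
    case: (eqVneq t 0) => [->|tn0].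
      rewrite rmorph0 scale0r mul0r; apply/le_anti/andP; split.
        apply: le_trans (Ple 0 0 0 Q00) _.
        by rewrite addr0 sublin0 // subr0.
      apply: (Pge) => c r Qcr; rewrite add0r subr_ge0; exact: QN.
    have tp : 0 < t by rewrite lt_def tn0 t0.
    apply/le_anti/andP; split.
      have -> : P (t%:C *: w) = t * (t^-1 * P (t%:C *: w)).
        by rewrite mulrA mulfV // mul1r.
      rewrite ler_pM2l //; apply: (Pge) => c r Qcr.
      rewrite -(ler_pM2l tp) mulrA mulfV // mul1r.
      apply: le_trans (Ple _ _ _ (QZ _ _ _ t0 Qcr)) _.
      by rewrite -scalerDr (proj2 sN) // mulrBr.
    apply: (Pge) => c r Qcr.
    have ti0 : 0 <= t^-1 by rewrite invr_ge0.
    have Q' := QZ _ _ _ ti0 Qcr.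
    have -> : t%:C *: w + c = t%:C *: (w + (t^-1)%:C *: c).
      by rewrite scalerDr scalerA -rmorphM mulfV // rmorph1 scale1r.
    rewrite (proj2 sN) //.
    have -> : r = t * (t^-1 * r) by rewrite mulrA mulfV // mul1r.
    rewrite -mulrBr ler_pM2l //; exact: Ple.
have [psi [psiD psiZ psiP]] := @HB _ _ sP.
have psiN : forall x, psi (- x) = - psi x.
  move=> x; have h0 : psi 0 = 0.
    by have := psiZ 0 0; rewrite rmorph0 scale0r mul0r.
  by apply/eqP; rewrite -addr_eq0 -psiD addNr h0.
exists psi; split => //.
- move=> x; apply: le_trans (psiP x) _; apply: le_trans (Ple x 0 0 Q00) _.
  by rewrite addr0 subr0.
- move=> c r Qcr; have := le_trans (psiP (- c)) (Ple _ _ _ Qcr).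
  by rewrite addNr sublin0 // sub0r psiN lerN2.
Qed.

Lemma HBsep (X : lmodType R[i]) (N : X -> R) (K : X -> Prop) (d : R) :
  sublin N ->
  (forall k1 k2 l, 0 <= l -> l <= 1 -> K k1 -> K k2 -> K (l%:C *: k1 + (1 - l)%:C *: k2)) ->
  (forall k, K k -> d <= N k) ->
  exists psi : X -> R, [/\ (forall x y, psi (x + y) = psi x + psi y),
     (forall t x, psi (t%:C *: x) = t * psi x), (forall x, psi x <= N x) &
     (forall k, K k -> d <= psi k)].
Proof.
move=> sN Kc KN.
pose Q w r := (w = 0 /\ r = 0) \/ exists t k, [/\ 0 < t, K k, w = t%:C *: k & r = t * d].
have [psi [pD pZ pN pQ]] : exists psi : X -> R, [/\ (forall x y, psi (x + y) = psi x + psi y),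
     (forall t x, psi (t%:C *: x) = t * psi x), (forall x, psi x <= N x) &
     (forall c r, Q c r -> r <= psi c)].
  apply: HBcone => //.
  - by left.
  - move=> c1 r1 c2 r2 [[-> ->]|h1] [[-> ->]|h2].
    + by left; rewrite !addr0.
    + by right; rewrite !add0r.
    + by right; rewrite !addr0.
    case: h1 => t1 [k1 [t1p K1 -> ->]]; case: h2 => t2 [k2 [t2p K2 -> ->]].
    have tp : 0 < t1 + t2 by rewrite addr_gt0.
    have tn0 : t1 + t2 != 0 by rewrite gt_eqF.
    right; exists (t1 + t2), ((t1 / (t1 + t2))%:C *: k1 + (1 - t1 / (t1 + t2))%:C *: k2).
    split => //.
    + apply: Kc => //; first by rewrite divr_ge0 // ltW.
      by rewrite ler_pdivrMr // mul1r lerDl ltW.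
    + rewrite scalerDr !scalerA -!rmorphM; congr (_ *: _ + _ *: _); congr (_%:C).
        by rewrite mulrC divfK.
      by rewrite mulrBr mulr1 mulrC divfK // addrAC subrr add0r.
    + by rewrite mulrDl.
  - move=> t c r t0 [[-> ->]|[t' [k [t'p Kk -> ->]]]].
      by left; rewrite scaler0 mulr0.
    case: (eqVneq t 0) => [->|tn0].
      by left; rewrite rmorph0 !scale0r mul0r.
    have tp : 0 < t by rewrite lt_def tn0 t0.
    by right; exists (t * t'), k; rewrite mulr_gt0 // scalerA -rmorphM mulrA.
  - move=> c r [[-> ->]|[t [k [tp Kk -> ->]]]]; first by rewrite sublin0.
    rewrite (proj2 sN); last exact: ltW.
    apply: ler_wpM2l; [exact: ltW | exact: KN].
exists psi; split => // k Kk; apply: pQ; right; exists 1, k.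
by rewrite ltr01 rmorph1 scale1r mul1r.
Qed.

End HB.
Arguments HBsep {R X N K d}.

Section CX.
Context {R : realType}.
Implicit Types (z w a b : R[i]).

Lemma cabsE z : (cabs z)%:C = `|z|.
Proof. by rewrite normc_def. Qed.

Lemma cabs_ge0 z : 0 <= cabs z.
Proof. exact: sqrtr_ge0. Qed.

Lemma cabsM a b : cabs (a * b) = cabs a * cabs b.
Proof. by have := normrM a b; rewrite -!cabsE -rmorphM => /complexI. Qed.

Lemma cabsD a b : cabs (a + b) <= cabs a + cabs b.
Proof. by have := ler_normD a b; rewrite -!cabsE -rmorphD lecR. Qed.

Lemma cabsN a : cabs (- a) = cabs a.
Proof. by have := normrN a; rewrite -!cabsE => /complexI. Qed.

Lemma cabs0 : cabs (0 : R[i]) = 0.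
Proof. by have := @normr0 _ R[i]; rewrite -cabsE -(rmorph0 (real_complex R)) => /complexI. Qed.

Lemma cabsR (t : R) : 0 <= t -> cabs t%:C = t.
Proof. by move=> t0; apply: complexI; rewrite !cabsE ger0_norm // lecR. Qed.

Lemma Re_le_cabs z : complex.Re z <= cabs z.
Proof.
rewrite /cabs; apply: le_trans (ler_norm _) _.
rewrite -sqrtr_sqr ler_sqrt ?lerDl ?sqr_ge0 //.
by rewrite addr_ge0 ?sqr_ge0.
Qed.

Lemma ii : 'i * 'i = -1 :> R[i].
Proof. by rewrite -expr2 sqr_i. Qed.

Lemma cmul (x y u v : R) : (x +i* y) * (u +i* v) = (x * u - y * v) +i* (x * v + y * u).
Proof. by []. Qed.

Lemma cdecomp (x y : R) : x +i* y = x%:C + y%:C * 'i.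
Proof. by rewrite [y%:C * _]cmul /=; congr (_ +i* _); lra. Qed.



Lemma complexify (V : lmodType R[i]) (nrm : V -> R) (s : R) (psi : V -> R) :
  (forall a x, nrm (a *: x) = cabs a * nrm x) ->
  (forall x y, psi (x + y) = psi x + psi y) ->
  (forall t x, psi (t%:C *: x) = t * psi x) ->
  (forall x, psi x <= s * nrm x) ->
  exists h : V -> R[i], [/\ (forall a x y, h (a *: x + y) = a * h x + h y),
     (forall x, complex.Re (h x) = psi x) & (forall x, cabs (h x) <= s * nrm x)].
Proof.
move=> nZ psiD psiZ psiP.
have psi0 : psi 0 = 0 by have := psiZ 0 0; rewrite rmorph0 scale0r mul0r.
have psiN : forall x, psi (- x) = - psi x.
  by move=> x; apply/eqP; rewrite -addr_eq0 -psiD addNr psi0.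
pose h x := psi x +i* (- psi ('i *: x)).
have hD : forall x y, h (x + y) = h x + h y.
  by move=> x y; rewrite /h scalerDr !psiD opprD.
have hZ : forall a x, h (a *: x) = a * h x.
  move=> [al be] x.
  have ax : (al +i* be) *: x = al%:C *: x + be%:C *: ('i *: x).
    by rewrite cdecomp scalerDl scalerA.
  have iix : 'i *: ('i *: x) = - x by rewrite scalerA ii scaleN1r.
  have p1 : psi ((al +i* be) *: x) = al * psi x + be * psi ('i *: x).
    by rewrite ax psiD !psiZ.
  have p2 : psi ('i *: ((al +i* be) *: x)) = al * psi ('i *: x) - be * psi x.
    rewrite ax scalerDr !scalerA [_ * al%:C]mulrC [_ * be%:C]mulrC -!scalerA iix.
    by rewrite psiD !psiZ psiN mulrN.
  rewrite /h p1 p2 cmul; congr (_ +i* _); lra.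
exists h; split => //.
- by move=> a x y; rewrite hD hZ.
move=> x; set z := h x.
have nN : nrm (- x) = nrm x by rewrite -scaleN1r nZ cabsN cabsR ?ler01 // mul1r.
case: (eqVneq z 0) => [->|zn0].
  rewrite cabs0; have := psiP x; have := psiP (- x); rewrite psiN nN; lra.
pose w := `|z| / z.
have wz : w * z = (cabs z)%:C by rewrite /w mulrAC -mulrA mulfV // mulr1 cabsE.
have cw : cabs w = 1.
  apply: complexI; rewrite cabsE /w normrM normfV normr_id mulfV ?rmorph1 //.
  by rewrite normr_eq0.
have := psiP (w *: x); rewrite nZ cw mul1r.
have -> : psi (w *: x) = complex.Re (h (w *: x)) by [].
by rewrite hZ wz.
Qed.

End CX.
Arguments complexify {R V nrm s psi}.

Section Gen.
Context {R : realType}.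

Lemma dn_ub (X : nspace R) (f : ns_car X -> R[i]) x M :
  (forall y, ns_in (n:=X) y -> cabs (f y) <= M * ns_norm (n:=X) y) ->
  (forall y, ns_in (n:=X) y -> 0 <= ns_norm (n:=X) y) ->
  ns_in (n:=X) x -> ns_norm (n:=X) x <= 1 -> cabs (f x) <= dual_norm f.
Proof.
move=> hM h0 xin x1; apply: ub_le_sup; last by exists x.
exists `|M| => r [y [yin y1 ->]].
apply: le_trans (hM _ yin) _; apply: le_trans (ler_wpM2r (h0 _ yin) (ler_norm M)) _.
by rewrite -[leRHS]mulr1 ler_wpM2l.
Qed.

Lemma dn_le (X : nspace R) (f : ns_car X -> R[i]) x0 s :
  ns_in (n:=X) x0 -> ns_norm (n:=X) x0 <= 1 ->
  (forall y, ns_in (n:=X) y -> ns_norm (n:=X) y <= 1 -> cabs (f y) <= s) ->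
  dual_norm f <= s.
Proof.
move=> x0in x01 hs; apply: ge_sup; first by exists (cabs (f x0)), x0.
by move=> r [y [yin y1 ->]]; apply: hs.
Qed.

End Gen.

Section Main.
Variables (R : realType) (V : lmodType R[i]) (mul : V -> V -> V) (nrm : V -> R).
Hypothesis hBA : is_banach_algebra mul nrm.

Local Notation blf f := (is_blf (X := spaceA nrm) f).

Lemma mulA x y z : mul x (mul y z) = mul (mul x y) z.
Proof. have [mA [mDl [mDr [n0 [ne0 [nD [nZ [nM _]]]]]]]] := hBA; exact: mA. Qed.
Lemma mulDl a x y z : mul (a *: x + y) z = a *: mul x z + mul y z.
Proof. have [mA [mDl [mDr [n0 [ne0 [nD [nZ [nM _]]]]]]]] := hBA; exact: mDl. Qed.
Lemma mulDr a x y z : mul z (a *: x + y) = a *: mul z x + mul z y.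
Proof. have [mA [mDl [mDr [n0 [ne0 [nD [nZ [nM _]]]]]]]] := hBA; exact: mDr. Qed.
Lemma nrm_ge0 x : 0 <= nrm x.
Proof. have [mA [mDl [mDr [n0 [ne0 [nD [nZ [nM _]]]]]]]] := hBA; exact: n0. Qed.
Lemma nrm_eq0 x : nrm x = 0 -> x = 0.
Proof. have [mA [mDl [mDr [n0 [ne0 [nD [nZ [nM _]]]]]]]] := hBA; exact: ne0. Qed.
Lemma nrmD x y : nrm (x + y) <= nrm x + nrm y.
Proof. have [mA [mDl [mDr [n0 [ne0 [nD [nZ [nM _]]]]]]]] := hBA; exact: nD. Qed.
Lemma nrmZ a x : nrm (a *: x) = cabs a * nrm x.
Proof. have [mA [mDl [mDr [n0 [ne0 [nD [nZ [nM _]]]]]]]] := hBA; exact: nZ. Qed.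
Lemma nrmM x y : nrm (mul x y) <= nrm x * nrm y.
Proof. have [mA [mDl [mDr [n0 [ne0 [nD [nZ [nM _]]]]]]]] := hBA; exact: nM. Qed.

Lemma nrm0 : nrm 0 = 0.
Proof. by have := nrmZ 0 0; rewrite scaler0 cabs0 mul0r. Qed.
Lemma nrmN x : nrm (- x) = nrm x.
Proof. by rewrite -scaleN1r nrmZ cabsN cabsR ?ler01 // mul1r. Qed.
Lemma nrmR t x : 0 <= t -> nrm (t%:C *: x) = t * nrm x.
Proof. by move=> t0; rewrite nrmZ cabsR. Qed.

Lemma blfL {f} : blf f -> forall a x y, f (a *: x + y) = a * f x + f y.
Proof. by case=> h _ a x y; apply: h. Qed.
Lemma blf0 {f} : blf f -> f 0 = 0.
Proof.
move=> bf; have := blfL bf 1 0 0; rewrite scaler0 addr0 mul1r => h.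
by apply: (addrI (f 0)); rewrite -h addr0.
Qed.
Lemma blfZ {f} : blf f -> forall a x, f (a *: x) = a * f x.
Proof. by move=> bf a x; have := blfL bf a x 0; rewrite addr0 blf0 // addr0. Qed.
Lemma blfD {f} : blf f -> forall x y, f (x + y) = f x + f y.
Proof. by move=> bf x y; have := blfL bf 1 x y; rewrite scale1r mul1r. Qed.
Lemma blfN {f} : blf f -> forall x, f (- x) = - f x.
Proof. by move=> bf x; rewrite -scaleN1r blfZ // mulN1r. Qed.
Lemma blfB {f} : blf f -> forall x y, f (x - y) = f x - f y.
Proof. by move=> bf x y; rewrite blfD // blfN. Qed.

Lemma blf_mk f M : (forall a x y, f (a *: x + y) = a * f x + f y) ->
  (forall x, cabs (f x) <= M * nrm x) -> blf f.
Proof. by move=> hl hb; split; [move=> a x y _ _; apply: hl | exists M => x _]. Qed.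

Lemma dnA_ub f x : blf f -> nrm x <= 1 -> cabs (f x) <= dual_norm (X := spaceA nrm) f.
Proof.
case=> _ [M hM] x1; apply: (@dn_ub _ (spaceA nrm) f x M) => //.
by move=> y _; apply: nrm_ge0.
Qed.

Lemma dnA_ge0 f : blf f -> 0 <= dual_norm (X := spaceA nrm) f.
Proof.
move=> bf; apply: le_trans (cabs_ge0 (f 0)) _; apply: dnA_ub => //.
by rewrite nrm0.
Qed.

Lemma fbound f x : blf f -> cabs (f x) <= dual_norm (X := spaceA nrm) f * nrm x.
Proof.
move=> bf; case: (eqVneq (nrm x) 0) => [h|nx0].
  by rewrite h mulr0 (nrm_eq0 _ h) blf0 // cabs0.
have nxp : 0 < nrm x by rewrite lt_def nx0 nrm_ge0.
have := @dnA_ub f ((nrm x)^-1%:C *: x) bf.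
rewrite nrmR ?invr_ge0 ?nrm_ge0 // mulVf // lexx => /(_ isT).
rewrite blfZ // cabsM cabsR ?invr_ge0 ?nrm_ge0 //.
by rewrite ler_pdivrMl // mulrC.
Qed.

Lemma blf_zero : blf (fun _ => 0).
Proof. apply: (@blf_mk _ 0) => [a x y|x]; first by rewrite mulr0 addr0.
by rewrite cabs0 mul0r. Qed.

Lemma blf_comb {f g} a : blf f -> blf g -> blf (fun x => a * f x + g x).
Proof.
move=> bf bg; case: (bf) => _ [M1 h1]; case: (bg) => _ [M2 h2].
apply: (@blf_mk _ (cabs a * M1 + M2)) => [b x y|x].
  by rewrite (blfL bf) (blfL bg); ring.
apply: le_trans (cabsD _ _) _; rewrite cabsM mulrDl -mulrA.
apply: lerD; [apply: ler_wpM2l; [apply: cabs_ge0|apply: h1] | apply: h2] => //.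
Qed.


Local Notation inbi eta := (in_bidual nrm eta).

Lemma etaL {eta f g} a : inbi eta -> blf f -> blf g ->
  eta (fun x => a * f x + g x) = a * eta f + eta g.
Proof. by case=> h _ bf bg; apply: (h a f g bf bg). Qed.

Lemma eta0 {eta} : inbi eta -> eta (fun _ => 0) = 0.
Proof.
move=> he; have h := etaL 1 he blf_zero blf_zero; cbv beta in h.
have e : (fun x : V => 1 * (0 : R[i]) + 0) = (fun _ => 0).
  by apply: funext => x; rewrite mul1r addr0.
rewrite e mul1r in h.
by apply: (addrI (eta (fun _ => 0))); rewrite -h addr0.
Qed.

Lemma etaZ {eta f} a : inbi eta -> blf f -> eta (fun x => a * f x) = a * eta f.
Proof.
move=> he bf; have h := etaL a he bf blf_zero; cbv beta in h.
have e : (fun x : V => a * f x + 0) = (fun x => a * f x).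
  by apply: funext => x; rewrite addr0.
by rewrite e eta0 // addr0 in h.
Qed.

Lemma etaD {eta f g} : inbi eta -> blf f -> blf g ->
  eta (fun x => f x + g x) = eta f + eta g.
Proof.
move=> he bf bg; have h := etaL 1 he bf bg; cbv beta in h.
have e : (fun x : V => 1 * f x + g x) = (fun x => f x + g x).
  by apply: funext => x; rewrite mul1r.
by rewrite e mul1r in h.
Qed.

Lemma canon_blf a : inbi (Defs.canon (X := spaceA nrm) a).
Proof.
split => [b f g _ _ //|]; exists (nrm a) => f bf.
rewrite /Defs.canon mulrC; exact: fbound.
Qed.

Lemma dn_nonneg (g : V -> R[i]) : ns_in (n := Adual nrm) g -> 0 <= ns_norm (n := Adual nrm) g.
Proof. exact: dnA_ge0. Qed.

Lemma eta_bound eta h s : inbi eta -> blf h -> 0 < s ->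
  (forall x, cabs (h x) <= s * nrm x) -> cabs (eta h) <= bidual_norm nrm eta * s.
Proof.
move=> he bh sp hs.
have bh' : blf (fun x => s^-1%:C * h x).
  have h1 := blf_comb (s^-1%:C) bh blf_zero; cbv beta in h1.
  have e : (fun x : V => s^-1%:C * h x + 0) = (fun x => s^-1%:C * h x).
    by apply: funext => x; rewrite addr0.
  by rewrite e in h1.
have si0 : 0 <= s^-1 by rewrite invr_ge0 ltW.
have dn1 : dual_norm (X := spaceA nrm) (fun x => s^-1%:C * h x) <= 1.
  apply: (@dn_le _ (spaceA nrm) _ 0) => //=; first by rewrite nrm0.
  move=> y _ y1; rewrite cabsM cabsR //.
  rewrite ler_pdivrMl // mulr1; apply: le_trans (hs y) _.
  by rewrite -[leRHS]mulr1; apply: ler_wpM2l; [exact: ltW | exact: y1].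
case: (he) => _ [M hM].
have := @dn_ub _ (Adual nrm) eta (fun x => s^-1%:C * h x) M hM dn_nonneg bh' dn1.
rewrite etaZ // cabsM cabsR // => h1.
by move: h1; rewrite ler_pdivrMl // mulrC.
Qed.


Lemma ReD (z w : R[i]) : complex.Re (z + w) = complex.Re z + complex.Re w.
Proof. by case: z; case: w. Qed.
Lemma ReR (t : R) (z : R[i]) : complex.Re (t%:C * z) = t * complex.Re z.
Proof. by case: z => a b /=; ring. Qed.

Local Notation blf1 f := (is_blf (X := spaceA1 mul nrm) f).

Lemma f1L {f} : blf1 f -> forall a u v,
  f (A1_incl (a *: u + v)) = a * f (A1_incl u) + f (A1_incl v).
Proof. by case=> h _ a u v; have := h a (A1_incl u) (A1_incl v) I I; rewrite /= mulr0 addr0. Qed.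
Lemma f10 {f} : blf1 f -> f (A1_incl 0) = 0.
Proof.
move=> bf; have := f1L bf 1 0 0; rewrite scaler0 addr0 mul1r => h.
by apply: (addrI (f (A1_incl 0))); rewrite -h addr0.
Qed.
Lemma f1Z {f} : blf1 f -> forall a u, f (A1_incl (a *: u)) = a * f (A1_incl u).
Proof. by move=> bf a u; have := f1L bf a u 0; rewrite addr0 f10 // addr0. Qed.
Lemma f1D {f} : blf1 f -> forall u v, f (A1_incl (u + v)) = f (A1_incl u) + f (A1_incl v).
Proof. by move=> bf u v; have := f1L bf 1 u v; rewrite scale1r mul1r. Qed.

Local Notation rA := (rA mul nrm).

Lemma rA0 : rA 0.
Proof.
split.
  move=> u _; split => // f [bf _ _]; by rewrite blf0 // /cre.
move=> _; split => // f [bf _ _]; by rewrite f10 // /cre.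
Qed.

Lemma rAD a b : rA a -> rA b -> rA (a + b).
Proof.
move=> [ha1 ha2] [hb1 hb2]; split.
  move=> u hu; split => // f sf; case: (sf) => bf _ _.
  rewrite /cre blfD // ReD; apply: addr_ge0.
    exact: (proj2 (ha1 u hu) f sf).
  exact: (proj2 (hb1 u hu) f sf).
move=> nu; split => // f sf; case: (sf) => bf _ _.
rewrite /cre f1D // ReD; apply: addr_ge0.
  exact: (proj2 (ha2 nu) f sf).
exact: (proj2 (hb2 nu) f sf).
Qed.

Lemma rAZ t a : 0 <= t -> rA a -> rA (t%:C *: a).
Proof.
move=> t0 [ha1 ha2]; split.
  move=> u hu; split => // f sf; case: (sf) => bf _ _.
  rewrite /cre blfZ // ReR; apply: mulr_ge0 => //.
  exact: (proj2 (ha1 u hu) f sf).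
move=> nu; split => // f sf; case: (sf) => bf _ _.
rewrite /cre f1Z // ReR; apply: mulr_ge0 => //.
exact: (proj2 (ha2 nu) f sf).
Qed.


Lemma blf_sum (I : Type) (r : seq I) (c : I -> R[i]) (g : I -> V -> R[i]) :
  (forall i, blf (g i)) ->
  blf (fun x => \sum_(i <- r) c i * g i x) /\
  (forall eta, inbi eta -> eta (fun x => \sum_(i <- r) c i * g i x) = \sum_(i <- r) c i * eta (g i)).
Proof.
move=> bg; elim: r => [|j r [IHb IHe]].
  have -> : (fun x : V => \sum_(i <- [::]) c i * g i x) = (fun _ => 0).
    by apply: funext => x; rewrite big_nil.
  by split; [exact: blf_zero | move=> eta he; rewrite eta0 // big_nil].
have -> : (fun x : V => \sum_(i <- j :: r) c i * g i x) =
    (fun x => c j * g j x + (fun x => \sum_(i <- r) c i * g i x) x).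
  by apply: funext => x; rewrite big_cons.
split; first exact: blf_comb.
by move=> eta he; rewrite etaL // big_cons IHe.
Qed.

Lemma ffun_decomp (M : zmodType) n (w : {ffun 'I_n -> M}) :
  w = \sum_k [ffun j => if j == k then w k else 0].
Proof.
apply/ffunP => j; rewrite sum_ffunE (bigD1 j) //= ffunE eqxx big1 ?addr0 //.
by move=> k kj; rewrite ffunE eq_sym (negbTE kj).
Qed.

Lemma ffun_additive (M : zmodType) n (psi : {ffun 'I_n -> M} -> R) :
  (forall x y, psi (x + y) = psi x + psi y) -> forall w,
  psi w = \sum_k psi [ffun j => if j == k then w k else 0].
Proof.
move=> pD w; have p0 : psi 0 = 0.
  by apply: (addrI (psi 0)); rewrite -pD !addr0.
rewrite {1}(@ffun_decomp _ _ w); exact: (big_morph psi pD p0).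
Qed.


Lemma ReNeg (z : R[i]) : complex.Re (- z) = - complex.Re z.
Proof. by case: z. Qed.

Lemma ReN1 (z : R[i]) : complex.Re (-1 * z) = - complex.Re z.
Proof. by case: z => a b /=; ring. Qed.

Lemma part1 : wstar_dense_in nrm rA (rA2 mul nrm) ->
  wstar_dense_in nrm (fun x => rA x /\ nrm x <= 1)
                 (fun eta => rA2 mul nrm eta /\ bidual_norm nrm eta <= 1).
Proof.
move=> hd eta [reta eta1] n fs eps bfs epsp.
apply: contrapT => H.
have inb : inbi eta by case: reta.
pose X1 := {ffun 'I_n -> R[i]^o}.
pose p : X1 := [ffun i => eta (fs i)].
pose T x : X1 := [ffun i => fs i x].
pose N1 (z : X1) := \sum_i cabs (z i).
have N1Z : forall a z, N1 (a *: z) = cabs a * N1 z.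
  move=> a z; rewrite /N1 mulr_sumr; apply: eq_bigr => i _.
  rewrite ffunE; exact: cabsM.
have sN1 : sublin N1.
  split => [z w|t z t0]; last by rewrite N1Z cabsR.
  rewrite /N1 -big_split; apply: ler_sum => i _; rewrite ffunE; exact: cabsD.
pose K1 z := exists x, (rA x /\ nrm x <= 1) /\ z = p - T x.
have K1c : forall k1 k2 l, 0 <= l -> l <= 1 -> K1 k1 -> K1 k2 ->
    K1 (l%:C *: k1 + (1 - l)%:C *: k2).
  move=> k1 k2 l l0 l1 [x1 [[r1 n1] ->]] [x2 [[r2 n2] ->]].
  have l0' : 0 <= 1 - l by rewrite subr_ge0.
  exists (l%:C *: x1 + (1 - l)%:C *: x2); split.
    split; first by apply: rAD; apply: rAZ.
    apply: le_trans (nrmD _ _) _; rewrite !nrmR //.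
    have := ler_wpM2l l0 n1; have := ler_wpM2l l0' n2; lra.
  apply/ffunP => i; rewrite !ffunE (blfL (bfs i)) (blfZ (bfs i)).
  change ((l%:C) * (eta (fs i) - fs i x1) + (1 - l)%:C * (eta (fs i) - fs i x2) =
    eta (fs i) - (l%:C * fs i x1 + (1 - l)%:C * fs i x2)).
  rewrite rmorphB rmorph1; ring.
have KN : forall k, K1 k -> eps <= N1 k.
  move=> k [x [hx ->]].
  have : ~ (forall i, cabs (eta (fs i) - fs i x) < eps) by move=> h; apply: H; exists x.
  move/existsNP => [i /negP]; rewrite -leNgt => hi.
  apply: le_trans hi _; rewrite /N1 (bigD1 i) //= !ffunE lerDl.
  by apply: sumr_ge0 => j _; exact: cabs_ge0.
have [psi1 [p1D p1Z p1N p1K]] := HBsep sN1 K1c KN.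
have p1N' : forall x, psi1 x <= 1 * N1 x by move=> x; rewrite mul1r.
have [h1 [h1L h1Re h1b]] := complexify N1Z p1D p1Z p1N'.
have h10 : h1 0 = 0.
  have := h1L 1 0 0; rewrite scaler0 addr0 mul1r => h.
  by apply: (addrI (h1 0)); rewrite -h addr0.
have h1D : forall x y, h1 (x + y) = h1 x + h1 y.
  by move=> x y; rewrite -[x in LHS]scale1r h1L mul1r.
have h1Z : forall a x, h1 (a *: x) = a * h1 x.
  by move=> a x; rewrite -[_ *: _]addr0 h1L h10 addr0.
pose e k : X1 := [ffun j => if j == k then 1 else 0].
have h1E : forall z, h1 z = \sum_k z k * h1 (e k).
  move=> z; rewrite {1}(@ffun_decomp _ _ z) (big_morph h1 h1D h10).
  apply: eq_bigr => k _.
  have -> : [ffun j => if j == k then z k else 0] = z k *: e k.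
    apply/ffunP => j; rewrite !ffunE; case: (j == k).
      by rewrite [RHS]mulr1.
    by rewrite [RHS]mulr0.
  by rewrite h1Z.
pose c k := h1 (e k).
have [bf etaf] := @blf_sum _ (index_enum 'I_n) c _ bfs.
set f := (fun x => _) in bf etaf.
have fT : forall x, f x = h1 (T x).
  move=> x; rewrite h1E /f; apply: eq_bigr => k _; by rewrite ffunE mulrC.
have Ref : forall x, complex.Re (f x) = psi1 (T x) by move=> x; rewrite fT h1Re.
have Reetaf : complex.Re (eta f) = psi1 p.
  rewrite etaf // -h1Re h1E; congr (complex.Re _); apply: eq_bigr => k _.
  by rewrite ffunE mulrC.
have p10 : psi1 0 = 0 by apply: (addrI (psi1 0)); rewrite -p1D !addr0.
have p1B : forall x y, psi1 (x - y) = psi1 x - psi1 y.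
  move=> x y; rewrite p1D; congr (_ + _); apply: (addrI (psi1 y)).
  by rewrite -p1D !subrr.
pose s := psi1 p - eps.
have fCB : forall x, rA x -> nrm x <= 1 -> complex.Re (f x) <= s.
  move=> x rx nx; rewrite Ref.
  have := p1K (p - T x) (ex_intro _ x (conj (conj rx nx) erefl)).
  rewrite p1B /s; lra.
have f0 : f 0 = 0 by rewrite blf0.
have s0 : 0 <= s by have := fCB 0 rA0; rewrite nrm0 f0 ler01 => /(_ isT).
pose s2 := s + eps / 2.
have s2p : 0 < s2 by rewrite /s2; lra.
pose N2 x := s2 * nrm x.
have sN2 : sublin N2.
  split => [x y|t x t0]; last by rewrite /N2 nrmR // mulrCA.
  rewrite /N2 -mulrDr; apply: ler_wpM2l; [exact: ltW | exact: nrmD].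
pose Q2 c r := rA c /\ r = complex.Re (f c).
have [psi2 [p2D p2Z p2N p2Q]] : exists psi : V -> R, [/\ (forall x y, psi (x + y) = psi x + psi y),
     (forall t x, psi (t%:C *: x) = t * psi x), (forall x, psi x <= N2 x) &
     (forall c r, Q2 c r -> r <= psi c)].
  apply: HBcone => //.
  - by split; [exact: rA0 | rewrite f0].
  - move=> c1 r1 c2 r2 [q1 ->] [q2 ->]; split; first exact: rAD.
    by rewrite (blfD bf) ReD.
  - move=> t cc r t0 [qc ->]; split; first exact: rAZ.
    by rewrite (blfZ bf) ReR.
  - move=> cc r [rc ->]; rewrite /N2.
    case: (eqVneq (nrm cc) 0) => [h|nc0].
      by rewrite h mulr0 (nrm_eq0 _ h) f0.
    have ncp : 0 < nrm cc by rewrite lt_def nc0 nrm_ge0.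
    have ti0 : 0 <= (nrm cc)^-1 by rewrite invr_ge0 nrm_ge0.
    have := fCB ((nrm cc)^-1%:C *: cc) (rAZ _ _ ti0 rc).
    rewrite nrmR // mulVf // lexx (blfZ bf) ReR => /(_ isT).
    rewrite ler_pdivrMl // => h; apply: le_trans h _.
    rewrite mulrC; apply: ler_wpM2r; first exact: nrm_ge0.
    rewrite /s2; lra.
have p2N' : forall x, psi2 x <= s2 * nrm x by [].
have [h2 [h2L h2Re h2b]] := complexify nrmZ p2D p2Z p2N'.
have bh2 : blf h2 by apply: (@blf_mk _ s2).
have bg := blf_comb (-1) bh2 bf.
set g := (fun x => _) in bg.
have etag : eta g = -1 * eta h2 + eta f by rewrite /g etaL.
have gle : forall x, rA x -> complex.Re (g x) <= 0.
  move=> x rx; rewrite /g ReD ReN1 h2Re.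
  have := p2Q x _ (conj rx erefl); lra.
have Reg : complex.Re (eta g) <= 0.
  rewrite leNgt; apply/negP => gp.
  have [x [rx hx]] := hd eta reta 1 (fun _ => g) _ (fun _ => bg) gp.
  have hx0 := hx ord0; have hg1 := gle x rx; have hg2 := Re_le_cabs (eta g - g x).
  rewrite ReD ReNeg in hg2.
  clear -hx0 hg1 hg2; lra.
have Reh2 : complex.Re (eta h2) <= s2.
  apply: le_trans (Re_le_cabs _) _; apply: le_trans (eta_bound _ _ _ inb bh2 s2p h2b) _.
  rewrite -[leRHS]mul1r; apply: ler_wpM2r => //; exact: ltW.
move: Reg; rewrite etag ReD ReN1 Reetaf /s2 /s in Reh2 *; lra.
Qed.


Lemma mul0l z : mul 0 z = 0.
Proof.
have := mulDl 1 0 0 z; rewrite !scale1r addr0 => h.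
by apply: (addrI (mul 0 z)); rewrite -h addr0.
Qed.
Lemma mul0r z : mul z 0 = 0.
Proof.
have := mulDr 1 0 0 z; rewrite !scale1r addr0 => h.
by apply: (addrI (mul z 0)); rewrite -h addr0.
Qed.
Lemma mulZl c x z : mul (c *: x) z = c *: mul x z.
Proof. by have := mulDl c x 0 z; rewrite !addr0 mul0l addr0. Qed.
Lemma mulZr c x z : mul z (c *: x) = c *: mul z x.
Proof. by have := mulDr c x 0 z; rewrite !addr0 mul0r addr0. Qed.
Lemma mulDl' x y z : mul (x + y) z = mul x z + mul y z.
Proof. by have := mulDl 1 x y z; rewrite !scale1r. Qed.
Lemma mulDr' x y z : mul z (x + y) = mul z x + mul z y.
Proof. by have := mulDr 1 x y z; rewrite !scale1r. Qed.

Lemma affineV (u1 u2 a : V) (l : R) :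
  l%:C *: (u1 - a) + (1 - l)%:C *: (u2 - a) = l%:C *: u1 + (1 - l)%:C *: u2 - a.
Proof.
rewrite !scalerBr addrACA -opprD -scalerDl -rmorphD [l + _]addrC subrK.
by rewrite rmorph1 scale1r.
Qed.


Lemma key2 E : wstar_dense_in nrm rA (rA2 mul nrm) -> mixed_identity mul nrm E ->
  bidual_norm nrm E <= 1 -> rA2 mul nrm E ->
  forall (F : seq V) (d : R), 0 < d -> exists x, (rA x /\ nrm x <= 1) /\
    forall a, a \in F -> nrm (mul x a - a) < d /\ nrm (mul a x - a) < d.
Proof.
move=> hd [inE mixE] E1 rE F d dp.
have hd1 := part1 hd.
apply: contrapT => H.
pose L := F ++ F.
pose m := size L.
pose ak (k : 'I_m) := nth 0 L k.
pose D (k : 'I_m) x := if (k < size F)%N then mul x (ak k) - ak k else mul (ak k) x - ak k.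
pose X3 := {ffun 'I_m -> V}.
pose T3 x : X3 := [ffun k => D k x].
pose N3 (w : X3) := \sum_k nrm (w k).
have sN3 : sublin N3.
  split => [w1 w2|t w t0].
    rewrite /N3 -big_split; apply: ler_sum => k _; rewrite ffunE; exact: nrmD.
  rewrite /N3 mulr_sumr; apply: eq_bigr => k _; rewrite ffunE nrmR //.
pose K3 w := exists x, (rA x /\ nrm x <= 1) /\ w = T3 x.
have Dc : forall k x1 x2 l, D k (l%:C *: x1 + (1 - l)%:C *: x2) = l%:C *: D k x1 + (1 - l)%:C *: D k x2.
  move=> k x1 x2 l; rewrite /D; case: ifP => _.
    by rewrite affineV mulDl' !mulZl.
  by rewrite affineV mulDr' !mulZr.
have K3c : forall k1 k2 l, 0 <= l -> l <= 1 -> K3 k1 -> K3 k2 -> K3 (l%:C *: k1 + (1 - l)%:C *: k2).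
  move=> k1 k2 l l0 l1 [x1 [[r1 n1] ->]] [x2 [[r2 n2] ->]].
  have l0' : 0 <= 1 - l by rewrite subr_ge0.
  exists (l%:C *: x1 + (1 - l)%:C *: x2); split.
    split; first by apply: rAD; apply: rAZ.
    apply: le_trans (nrmD _ _) _; rewrite !nrmR //.
    have := ler_wpM2l l0 n1; have := ler_wpM2l l0' n2; lra.
  by apply/ffunP => k; rewrite !ffunE Dc.
have KN : forall w, K3 w -> d <= N3 w.
  move=> w [x [hx ->]].
  have [a aF ha] : exists2 a, a \in F & ~ (nrm (mul x a - a) < d /\ nrm (mul a x - a) < d).
    apply: contrapT => h; apply: H; exists x; split => // a aF.
    by apply: contrapT => h'; apply: h; exists a.
  have ja : (index a F < size F)%N by rewrite index_mem.
  have mk : forall k : 'I_m, d <= nrm (T3 x k) -> d <= N3 (T3 x).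
    move=> k hk; apply: le_trans hk _; rewrite /N3 (bigD1 k) //= lerDl.
    by apply: sumr_ge0 => j _; exact: nrm_ge0.
  have jm1 : (index a F < m)%N by rewrite /m size_cat ltn_addr.
  have jm2 : (index a F + size F < m)%N by rewrite /m size_cat ltn_add2r.
  have ak1 : ak (Ordinal jm1) = a by rewrite /ak /= nth_cat ja nth_index.
  have ak2 : ak (Ordinal jm2) = a.
    by rewrite /ak /= nth_cat ltnNge leq_addl /= addnK nth_index.
  case: (boolP (nrm (mul x a - a) < d)) => h1.
    have h2 : ~ nrm (mul a x - a) < d by move=> h2; apply: ha.
    apply: (mk (Ordinal jm2)); rewrite ffunE /D /= ltnNge leq_addl /= ak2.
    by rewrite leNgt; apply/negP.
  apply: (mk (Ordinal jm1)); rewrite ffunE /D /= ja ak1.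
  by rewrite leNgt.
have [psi3 [p3D p3Z p3N p3K]] := HBsep sN3 K3c KN.
pose del (k : 'I_m) (v : V) : X3 := [ffun j => if j == k then v else 0].
have delD : forall k u v, del k (u + v) = del k u + del k v.
  by move=> k u v; apply/ffunP => j; rewrite !ffunE; case: (j == k); rewrite ?addr0.
have delZ : forall k t u, del k (t%:C *: u) = t%:C *: del k u.
  by move=> k t u; apply/ffunP => j; rewrite !ffunE; case: (j == k); rewrite ?scaler0.
have delN : forall k v, N3 (del k v) = nrm v.
  move=> k v; rewrite /N3 (bigD1 k) //= ffunE eqxx big1 ?addr0 //.
  by move=> j jk; rewrite ffunE (negbTE jk) nrm0.
have hhex : forall k : 'I_m, exists h : V -> R[i], [/\ (forall a x y, h (a *: x + y) = a * h x + h y),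
     (forall x, complex.Re (h x) = psi3 (del k x)) & (forall x, cabs (h x) <= 1 * nrm x)].
  move=> k; apply: (complexify nrmZ).
  - by move=> u v; rewrite delD p3D.
  - by move=> t u; rewrite delZ p3Z.
  - by move=> u; rewrite mul1r -(delN k u).
have [hh hhP] := choice hhex.
have bhh : forall k, blf (hh k).
  by move=> k; case: (hhP k) => hL _ hb; apply: (@blf_mk _ 1).
have hhB : forall k u v, hh k (u - v) = hh k u - hh k v.
  move=> k u v; case: (hhP k) => hL _ _.
  by rewrite addrC -scaleN1r hL mulN1r addrC.
pose G (k : 'I_m) := if (k < size F)%N then (fun b => hh k (mul b (ak k)))
  else (fun b => hh k (mul (ak k) b)).
have bG : forall k, blf (G k).
  move=> k; case: (hhP k) => hL _ hb; rewrite /G; case: ifP => _.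
    apply: (@blf_mk _ (nrm (ak k))) => [a x y|x].
      by rewrite mulDl hL.
    apply: le_trans (hb _) _; rewrite mul1r mulrC; exact: nrmM.
  apply: (@blf_mk _ (nrm (ak k))) => [a x y|x].
    by rewrite mulDr hL.
  apply: le_trans (hb _) _; rewrite mul1r; exact: nrmM.
have EG : forall k, E (G k) = hh k (ak k).
  move=> k; rewrite /G; case: ifP => _.
    exact: (proj2 (mixE _ (canon_blf (ak k)) _ (bhh k))).
  exact: (proj1 (mixE _ (canon_blf (ak k)) _ (bhh k))).
pose eps := d / (m%:R + 1).
have m1p : 0 < m%:R + 1 :> R by rewrite ltr_wpDl ?ler0n.
have epsp : 0 < eps by rewrite divr_gt0.
have [x [[rx nx] hx]] := hd1 E (conj rE E1) m G eps bG epsp.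
have := p3K (T3 x) (ex_intro _ x (conj (conj rx nx) erefl)).
rewrite (@ffun_additive _ _ _ p3D).
have lek : forall k, psi3 [ffun j => if j == k then T3 x k else 0] <= cabs (E (G k) - G k x).
  move=> k; case: (hhP k) => _ hRe _; rewrite -/(del k (T3 x k)) -hRe ffunE.
  apply: le_trans (Re_le_cabs _) _; rewrite EG /G /D; case: ifP => _.
    by rewrite hhB -cabsN opprB.
  by rewrite hhB -cabsN opprB.
have : \sum_k psi3 [ffun j => if j == k then T3 x k else 0] <= \sum_(k < m) eps.
  apply: ler_sum => k _; apply: le_trans (lek k) _; exact: ltW.
rewrite sumr_const card_ord => hs hd'.
have := le_trans hd' hs; rewrite /eps.
rewrite -[_ *+ m]mulr_natr mulrAC ler_pdivlMr // mulrDr mulr1 => h.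
lra.
Qed.


Lemma cai_exists E : wstar_dense_in nrm rA (rA2 mul nrm) -> mixed_identity mul nrm E ->
  bidual_norm nrm E = 1 -> rA2 mul nrm E -> has_cai_in mul nrm rA.
Proof.
move=> hd mix E1 rE.
have E1' : bidual_norm nrm E <= 1 by rewrite E1.
have k2 := key2 E hd mix E1' rE.
pose I := {p : seq V * R | 0 < p.2}.
have ex : forall i : I, exists x, (rA x /\ nrm x <= 1) /\ forall a, a \in (sval i).1 ->
    nrm (mul x a - a) < (sval i).2 /\ nrm (mul a x - a) < (sval i).2.
  by move=> i; apply: k2; exact: (svalP i).
have [e eP] := choice ex.
pose le (i j : I) := {subset (sval i).1 <= (sval j).1} /\ (sval j).2 <= (sval i).2.
exists I, le, e; split.
- split.
  + by constructor; exact: (exist _ ([::], 1) ltr01).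
  + by move=> i; split.
  + move=> i j k [s1 l1] [s2 l2]; split; last exact: le_trans l2 l1.
    by move=> a ai; apply: s2; apply: s1.
  + move=> i j.
    have p : 0 < Order.min (sval i).2 (sval j).2 by rewrite lt_min (svalP i) (svalP j).
    exists (exist _ ((sval i).1 ++ (sval j).1, Order.min (sval i).2 (sval j).2) p).
    split; split => /=.
    * by move=> a ai; rewrite mem_cat ai.
    * by rewrite ge_min lexx.
    * by move=> a aj; rewrite mem_cat aj orbT.
    * by rewrite ge_min lexx orbT.
- by move=> i; case: (eP i) => [[h1 h2] _].
- move=> a; split => eps epsp; exists (exist _ ([:: a], eps) epsp) => i [si li];
    have ai : a \in (sval i).1 by apply: si; rewrite mem_seq1.
  + by case: (eP i) => _ h; have [h1 _] := h a ai; exact: lt_le_trans h1 li.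
  + by case: (eP i) => _ h; have [_ h1] := h a ai; exact: lt_le_trans h1 li.
Qed.

End Main.

Local Close Scope classical_set_scope.
Local Close Scope complex_scope.

Theorem proposition6p4 (R : realType) (V : lmodType R[i])
    (mul : V -> V -> V) (nrm : V -> R) :
  is_banach_algebra mul nrm ->
  approx_unital mul nrm ->
  wstar_dense_in nrm (rA mul nrm) (rA2 mul nrm) ->
  wstar_dense_in nrm (fun x => rA mul nrm x /\ nrm x <= 1)
                 (fun eta => rA2 mul nrm eta /\ bidual_norm nrm eta <= 1) /\
  ((exists E, [/\ mixed_identity mul nrm E, bidual_norm nrm E = 1
                & rA2 mul nrm E]) ->
   has_cai_in mul nrm (rA mul nrm)).
Proof.
move=> hBA _ hd; split; first exact: (@part1 R V mul nrm hBA hd).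
by move=> [E [mix E1 rE]]; exact: (@cai_exists R V mul nrm hBA E hd mix E1 rE).
Qed.
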